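(* Let $q$ be an odd prime power, $s\ge 1$, and $E,F\subset\mathbb{F}_q^s$. Then \begin{align*} \sum_{j \in \mathbb{F}_q} \nu(j)^2 & \le \frac{(\#E)^2(\#F)^2}{q} + q^{s-1} (\#E)(\#F) + q^{3s} \left|\sigma_{E,F}(0)\right|^2 + q^{3s} \sum_{r \in \mathbb{F}_q^*} \sigma_E(r) \sigma_F(r)\\ & \le \frac{(\#E)^2(\#F)^2}{q} + q^{3s} \sum_{r \in \mathbb{F}_q} \sigma_E(r) \sigma_F(r) + q^{s-1} (\#E)(\#F). \end{align*}
   Context: $\mathbb{F}_q$ is the finite field with $q$ elements ($q$ odd), $\mathbb{F}_q^*=\mathbb{F}_q\setminus\{0\}$. Fix a nontrivial additive character $\psi$ of $\mathbb{F}_q$. For $f:\mathbb{F}_q^s\to\mathbb{C}$, $\hat f(\mathbf{x})=q^{-s}\sum_{\mathbf{m}\in\mathbb{F}_q^s}\psi(-\mathbf{m}\cdot\mathbf{x})f(\mathbf{m})$. Sets are identified with their indicator functions. $|\mathbf{x}|^2=\sum_ix_i^2$. $\nu(j)=\#\{(\mathbf{x},\mathbf{y})\in E\times F: |\mathbf{x}-\mathbf{y}|^2=j\}$. $\sigma_E(r)=\sum_{\mathbf{a}:|\mathbf{a}|^2=r}|\hat E(\mathbf{a})|^2$, similarly $\sigma_F$, and $\sigma_{E,F}(r)=\sum_{\mathbf{m}:|\mathbf{m}|^2=r}\overline{\hat E(\mathbf{m})}\hat F(\mathbf{m})$. *)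

(* Defs.v *)
From mathcomp Require Import all_boot all_order all_algebra all_field.
Set Implicit Arguments. Unset Strict Implicit. Unset Printing Implicit Defensive.
Import Order.TTheory GRing.Theory Num.Theory.
Local Open Scope ring_scope.

(* Complex numbers are modelled by algC (values of additive characters of a
   finite field are algebraic). Vectors of F_q^s are row vectors 'rV[K]_s. *)

Definition dotv (K : finFieldType) (s : nat) (x y : 'rV[K]_s) : K :=
  \sum_(i < s) x 0 i * y 0 i.

Definition normsq (K : finFieldType) (s : nat) (x : 'rV[K]_s) : K := dotv x x.

Definition nontriv_add_char (K : finFieldType) (psi : K -> algC) : Prop :=
  [/\ psi 0 = 1, (forall x y, psi (x + y) = psi x * psi y) & exists x, psi x != 1].

Definition ind (K : finFieldType) (s : nat) (E : {set 'rV[K]_s}) (m : 'rV[K]_s) : algC :=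
  (m \in E)%:R.

Definition fourier (K : finFieldType) (s : nat) (psi : K -> algC)
  (f : 'rV[K]_s -> algC) (x : 'rV[K]_s) : algC :=
  (#|K|%:R ^- s) * \sum_(m : 'rV[K]_s) psi (- dotv m x) * f m.

Definition nu (K : finFieldType) (s : nat) (E F : {set 'rV[K]_s}) (j : K) : nat :=
  #|[set p : 'rV[K]_s * 'rV[K]_s |
      [&& p.1 \in E, p.2 \in F & normsq (p.1 - p.2) == j]]|.

Definition sigma (K : finFieldType) (s : nat) (psi : K -> algC)
  (E : {set 'rV[K]_s}) (r : K) : algC :=
  \sum_(a : 'rV[K]_s | normsq a == r) `|fourier psi (ind E) a| ^+ 2.

Definition sigmaEF (K : finFieldType) (s : nat) (psi : K -> algC)
  (E F : {set 'rV[K]_s}) (r : K) : algC :=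
  \sum_(m : 'rV[K]_s | normsq m == r)
     (fourier psi (ind E) m)^* * fourier psi (ind F) m.

(* Main.v *)
Require Import Defs.
From mathcomp Require Import all_boot all_order all_algebra all_field.
From mathcomp Require Import ring lra.
Import Order.TTheory GRing.Theory Num.Theory.
Local Open Scope ring_scope.
Set Implicit Arguments. Unset Strict Implicit. Unset Printing Implicit Defensive.


Lemma dotvC (K : finFieldType) s (x y : 'rV[K]_s) : dotv x y = dotv y x.
Proof. by rewrite /dotv; apply: eq_bigr => i _; rewrite mulrC. Qed.

Lemma dotvDr (K : finFieldType) s (x y z : 'rV[K]_s) :
  dotv x (y + z) = dotv x y + dotv x z.
Proof. by rewrite /dotv -big_split; apply: eq_bigr => i _; rewrite mxE mulrDr. Qed.

Lemma dotvDl (K : finFieldType) s (x y z : 'rV[K]_s) :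
  dotv (y + z) x = dotv y x + dotv z x.
Proof. by rewrite dotvC dotvDr ![dotv x _]dotvC. Qed.

Lemma dotvNr (K : finFieldType) s (x y : 'rV[K]_s) : dotv x (- y) = - dotv x y.
Proof. by rewrite /dotv -sumrN; apply: eq_bigr => i _; rewrite mxE mulrN. Qed.

Lemma dotvNl (K : finFieldType) s (x y : 'rV[K]_s) : dotv (- y) x = - dotv y x.
Proof. by rewrite dotvC dotvNr dotvC. Qed.

Lemma dotvBr (K : finFieldType) s (x y z : 'rV[K]_s) :
  dotv x (y - z) = dotv x y - dotv x z.
Proof. by rewrite dotvDr dotvNr. Qed.

Lemma dotvZr (K : finFieldType) s (x y : 'rV[K]_s) a : dotv x (a *: y) = a * dotv x y.
Proof. by rewrite /dotv mulr_sumr; apply: eq_bigr => i _; rewrite mxE mulrCA. Qed.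

Lemma dotvZl (K : finFieldType) s (x y : 'rV[K]_s) a : dotv (a *: y) x = a * dotv y x.
Proof. by rewrite dotvC dotvZr dotvC. Qed.

Lemma dotv0r (K : finFieldType) s (x : 'rV[K]_s) : dotv x 0 = 0.
Proof. by rewrite /dotv big1 // => i _; rewrite mxE mulr0. Qed.

Lemma dotv0l (K : finFieldType) s (x : 'rV[K]_s) : dotv 0 x = 0.
Proof. by rewrite dotvC dotv0r. Qed.

Lemma normsqD (K : finFieldType) s (x y : 'rV[K]_s) :
  normsq (x + y) = normsq x + 2 * dotv x y + normsq y.
Proof.
rewrite /normsq dotvDr !dotvDl (dotvC y x); ring.
Qed.

Lemma normsqZ (K : finFieldType) s (x : 'rV[K]_s) a : normsq (a *: x) = a ^+ 2 * normsq x.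
Proof. by rewrite /normsq dotvZr dotvZl mulrA expr2. Qed.


Lemma psiN (K : finFieldType) (psi : K -> algC) :
  psi 0 = 1 -> (forall x y, psi (x + y) = psi x * psi y) ->
  forall x, psi (- x) * psi x = 1.
Proof. by move=> p0 pD x; rewrite -pD addNr p0. Qed.

Lemma psiMn (K : finFieldType) (psi : K -> algC) :
  psi 0 = 1 -> (forall x y, psi (x + y) = psi x * psi y) ->
  forall x n, psi (x *+ n) = psi x ^+ n.
Proof.
move=> p0 pD x; elim=> [|n IH]; first by rewrite mulr0n p0 expr0.
by rewrite mulrS pD IH exprS.
Qed.

Lemma psi_norm (K : finFieldType) (psi : K -> algC) :
  psi 0 = 1 -> (forall x y, psi (x + y) = psi x * psi y) ->
  forall x, `|psi x| = 1.
Proof.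
move=> p0 pD x; have [p pp pc] := finPcharP K.
have h : psi x ^+ p = 1 by rewrite -(psiMn p0 pD) (mulrn_pchar pc) p0.
apply/eqP; rewrite -(pexpr_eq1 (prime_gt0 pp)) ?normr_ge0 //.
by rewrite -normrX h normr1.
Qed.

Lemma psi_conj (K : finFieldType) (psi : K -> algC) :
  psi 0 = 1 -> (forall x y, psi (x + y) = psi x * psi y) ->
  forall x, (psi x)^* = psi (- x).
Proof.
move=> p0 pD x.
have nz : psi x != 0 by apply/eqP => h; move: (psiN p0 pD x); rewrite h mulr0 => /eqP; rewrite eq_sym oner_eq0.
have -> : (psi x)^* = (psi x)^-1 by rewrite invC_norm (psi_norm p0 pD) expr1n invr1 mul1r.
by apply: (mulIf nz); rewrite mulVf // psiN.
Qed.

Lemma sum_psi_lin (K : finFieldType) (psi : K -> algC) (T : finZmodType) (L : T -> K) :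
  (forall x y, psi (x + y) = psi x * psi y) ->
  (forall a b, L (a + b) = L a + L b) -> forall z0, psi (L z0) != 1 ->
  \sum_z psi (L z) = 0.
Proof.
move=> pD LD z0 h.
have e : \sum_z psi (L z) = (\sum_z psi (L z)) * psi (L z0).
  rewrite mulr_suml (reindex_inj (addIr z0)) /=.
  by apply: eq_bigr => z _; rewrite LD pD.
have : (\sum_z psi (L z)) * (1 - psi (L z0)) = 0 by rewrite mulrBr mulr1 -e subrr.
move/eqP; rewrite mulf_eq0 subr_eq0 [1 == _]eq_sym (negbTE h) orbF.
by move/eqP.
Qed.

Lemma sum_const1 (T : finType) : \sum_(z : T) (1 : algC) = #|T|%:R.
Proof. by rewrite sumr_const. Qed.

Lemma orthK (K : finFieldType) (psi : K -> algC) :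
  psi 0 = 1 -> (forall x y, psi (x + y) = psi x * psi y) -> (exists x, psi x != 1) ->
  forall c : K, \sum_x psi (c * x) = if c == 0 then #|K|%:R else 0.
Proof.
move=> p0 pD [x0 hx0] c; case: ifPn => [/eqP ->|cn0].
  by rewrite -sum_const1; apply: eq_bigr => x _; rewrite mul0r p0.
apply: (@sum_psi_lin K psi _ (fun x => c * x) pD _ (c^-1 * x0)) => [a b|]; first by rewrite mulrDr.
by rewrite /= mulrA mulfV // mul1r.
Qed.

Lemma orthV (K : finFieldType) s (psi : K -> algC) :
  psi 0 = 1 -> (forall x y, psi (x + y) = psi x * psi y) -> (exists x, psi x != 1) ->
  forall a : 'rV[K]_s, \sum_z psi (dotv a z) = if a == 0 then (#|K|%:R) ^+ s else 0.
Proof.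
move=> p0 pD [x0 hx0] a; case: ifPn => [/eqP ->|an0].
  have -> : (#|K|%:R : algC) ^+ s = #|{: 'rV[K]_s}|%:R by rewrite card_mx mul1n natrX.
  rewrite -sum_const1.
  by apply: eq_bigr => x _; rewrite dotv0l p0.
have [i ai] : exists i, a 0 i != 0.
  case/boolP: [exists i, a 0 i != 0] => [/existsP //|/existsPn H].
  case/negP: an0; apply/eqP/rowP => i; move: (H i); rewrite negbK mxE => /eqP //.
apply: (@sum_psi_lin K psi _ (fun z => dotv a z) pD _ ((x0 / a 0 i) *: delta_mx 0 i)).
  by move=> u v; rewrite dotvDr.
rewrite dotvZr.
have -> : dotv a (delta_mx 0 i) = a 0 i.
  rewrite /dotv (bigD1 i) //= big1 ?addr0 => [|j ji]; first by rewrite mxE !eqxx mulr1.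
  by rewrite mxE (negbTE ji) andbF mulr0.
by rewrite divfK.
Qed.

Lemma normsum2 (I : finType) (P : pred I) (X : I -> algC) :
  `|\sum_(i | P i) X i| ^+ 2 = \sum_(i | P i) \sum_(k | P k) X i * (X k)^*.
Proof.
rewrite normCK rmorph_sum mulr_suml; apply: eq_bigr => i _; by rewrite mulr_sumr.
Qed.

Lemma parsevalK (K : finFieldType) (psi : K -> algC) :
  psi 0 = 1 -> (forall x y, psi (x + y) = psi x * psi y) -> (exists x, psi x != 1) ->
  forall c : K -> algC,
  \sum_j `|\sum_t psi (j * t) * c t| ^+ 2 = #|K|%:R * \sum_t `|c t| ^+ 2.
Proof.
move=> p0 pD pn c.
under eq_bigr => j _ do rewrite normsum2.
rewrite exchange_big mulr_sumr; apply: eq_bigr => t _ /=.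
rewrite exchange_big /=.
have h : forall t', \sum_j psi (j * t) * c t * (psi (j * t') * c t')^* =
    c t * (c t')^* * (if t - t' == 0 then #|K|%:R else 0).
  move=> t'; rewrite -(orthK p0 pD pn) mulr_sumr; apply: eq_bigr => j _.
  rewrite rmorphM /= (psi_conj p0 pD) mulrBl -mulrN pD (mulrC t) (mulrC t').
  rewrite mulrN; ring.
under eq_bigr => t' _ do rewrite h.
rewrite (bigD1 t) //= subrr eqxx big1 ?addr0 => [|t' ht']; first by rewrite normCK mulrC.
by rewrite subr_eq0 eq_sym (negbTE ht') mulr0.
Qed.

Lemma conj_sqnorm (x : algC) : (`|x| ^+ 2)^* = `|x| ^+ 2.
Proof. by rewrite normCK rmorphM /= conjCK mulrC. Qed.

Lemma CS (I : finType) (P : pred I) (a b : I -> algC) :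
  `|\sum_(i | P i) (a i)^* * b i| ^+ 2 <=
    (\sum_(i | P i) `|a i| ^+ 2) * (\sum_(i | P i) `|b i| ^+ 2).
Proof.
set A := \sum_(i | P i) `|a i| ^+ 2; set B := \sum_(i | P i) `|b i| ^+ 2.
set C := \sum_(i | P i) (a i)^* * b i.
have A0 : 0 <= A by apply: sumr_ge0 => i _; apply: exprn_ge0.
have [Az|Anz] := eqVneq A 0.
  have ha : forall i, P i -> a i = 0.
    move=> i Pi; have := psumr_eq0P (fun i _ => exprn_ge0 2 (normr_ge0 (a i))) Az Pi.
    by move/eqP; rewrite expf_eq0 /= normr_eq0 => /eqP.
  have -> : C = 0 by rewrite /C big1 // => i Pi; rewrite ha // rmorph0 mul0r.
  by rewrite Az normr0 expr0n mul0r.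
have Apos : 0 < A by rewrite lt_def Anz.
have Ac : A^* = A.
 by rewrite /A rmorph_sum; apply: eq_bigr => i _; exact: conj_sqnorm.
have E : \sum_(i | P i) `|A * b i - C * a i| ^+ 2 = A * (A * B - `|C| ^+ 2).
  transitivity (\sum_(i | P i) (A * A * `|b i| ^+ 2 + (- (A * C^*)) * ((a i)^* * b i)
       + (- (A * C)) * ((a i)^* * b i)^* + C * C^* * `|a i| ^+ 2)).
    apply: eq_bigr => i _; rewrite !normCK !rmorphB !rmorphM /= Ac !conjCK; ring.
  rewrite !big_split /= -!mulr_sumr -rmorph_sum /= -/A -/B -/C normCK; ring.
have : 0 <= A * (A * B - `|C| ^+ 2).
  by rewrite -E; apply: sumr_ge0 => i _; apply: exprn_ge0.
by rewrite pmulr_rge0 // subr_ge0.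
Qed.

Lemma qnz (K : finFieldType) : (#|K|%:R : algC) != 0.
Proof.
rewrite pnatr_eq0 -lt0n; apply/card_gt0P; by exists 0.
Qed.

Lemma inversion (K : finFieldType) s (psi : K -> algC) :
  psi 0 = 1 -> (forall x y, psi (x + y) = psi x * psi y) -> (exists x, psi x != 1) ->
  forall (g : 'rV[K]_s -> algC) z,
  g z = (#|K|%:R ^- s) * \sum_m (\sum_w g w * psi (- dotv m w)) * psi (dotv m z).
Proof.
move=> p0 pD pn g z.
have e : forall m, (\sum_w g w * psi (- dotv m w)) * psi (dotv m z) =
     \sum_w g w * psi (dotv (z - w) m).
  move=> m; rewrite mulr_suml; apply: eq_bigr => w _.
  by rewrite -mulrA -pD addrC -dotvBr dotvC.
under eq_bigr => m _ do rewrite e.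
rewrite exchange_big /=.
under eq_bigr => w _ do rewrite -mulr_sumr (orthV p0 pD pn).
rewrite (bigD1 z) //= subrr eqxx big1 ?addr0 => [|w wz]; last first.
  by rewrite subr_eq0 eq_sym (negbTE wz) mulr0.
by rewrite mulrCA mulVf ?mulr1 // expf_neq0 // qnz.
Qed.

Lemma ghat (K : finFieldType) s (psi : K -> algC) :
  psi 0 = 1 -> (forall x y, psi (x + y) = psi x * psi y) ->
  forall b : K, b != 0 -> (2 : K) != 0 -> forall m : 'rV[K]_s,
  \sum_w psi (b * normsq w) * psi (- dotv m w) =
  psi (- (2 * 2 * b)^-1 * normsq m) * \sum_(w : 'rV[K]_s) psi (b * normsq w).
Proof.
move=> p0 pD b bnz two m.
rewrite mulr_sumr (reindex_inj (addIr ((2 * b)^-1 *: m))) /=.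
apply: eq_bigr => w _; rewrite -!pD; congr psi.
rewrite normsqD normsqZ dotvDr !dotvZr (dotvC m w) /normsq.
field; rewrite bnz two andbT /=.
have -> : (4 : K) = 2 * 2 by rewrite -natrM.
by rewrite mulf_neq0.
Qed.

Lemma gauss2 (K : finFieldType) s (psi : K -> algC) :
  psi 0 = 1 -> (forall x y, psi (x + y) = psi x * psi y) -> (exists x, psi x != 1) ->
  forall b : K, b != 0 -> (2 : K) != 0 ->
  (\sum_(w : 'rV[K]_s) psi (b * normsq w)) * (\sum_(w : 'rV[K]_s) psi (b * normsq w))^*
    = #|K|%:R ^+ s.
Proof.
move=> p0 pD pn b bnz two.
rewrite rmorph_sum /= mulr_sumr.
have e : forall w : 'rV[K]_s, (\sum_(z : 'rV[K]_s) psi (b * normsq z)) * (psi (b * normsq w))^* =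
   \sum_(z : 'rV[K]_s) psi (b * normsq z) * psi (dotv ((2 * b) *: z) w).
  move=> w; have -> : (psi (b * normsq w))^* = psi (- (b * normsq w)) by apply: psi_conj.
  rewrite mulr_suml (reindex_inj (addIr w)) /=.
  apply: eq_bigr => z _; rewrite -!pD; congr psi.
  rewrite normsqD dotvZl; ring.
rewrite (eq_bigr _ (fun w _ => e w)).
rewrite exchange_big /=.
under eq_bigr => z _ do rewrite -mulr_sumr (orthV p0 pD pn).
rewrite (bigD1 0) //= scaler0 eqxx big1 ?addr0 => [|z zn0]; last first.
  by rewrite scaler_eq0 mulf_eq0 (negbTE two) (negbTE bnz) (negbTE zn0) mulr0.
by rewrite /normsq dotv0l mulr0 p0 mul1r.
Qed.

Definition Aq (K : finFieldType) s (psi : K -> algC) (E F : {set 'rV[K]_s}) (t : K) : algC :=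
  \sum_(x : 'rV[K]_s) \sum_(y : 'rV[K]_s) ind E x * ind F y * psi (- (normsq (x - y) * t)).

Lemma conj_ind (K : finFieldType) s (E : {set 'rV[K]_s}) x : (ind E x)^* = ind E x.
Proof. exact: conjC_nat. Qed.

Lemma hatE_conj (K : finFieldType) s (psi : K -> algC) (E : {set 'rV[K]_s}) :
  psi 0 = 1 -> (forall x y, psi (x + y) = psi x * psi y) -> forall m,
  \sum_x ind E x * psi (dotv m x) = #|K|%:R ^+ s * (fourier psi (ind E) m)^*.
Proof.
move=> p0 pD m; rewrite /fourier rmorphM /= rmorph_sum /= mulrA.
have -> : ((#|K|%:R : algC) ^- s)^* = #|K|%:R ^- s.
  by rewrite fmorphV rmorphXn /= conjC_nat.
rewrite mulfV ?expf_neq0 ?qnz // mul1r; apply: eq_bigr => x _.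
rewrite mulrC rmorphM /= conj_ind; congr (_ * _).
have -> : (psi (- dotv x m))^* = psi (- - dotv x m) by apply: psi_conj.
by rewrite opprK dotvC.
Qed.

Lemma hatF (K : finFieldType) s (psi : K -> algC) (F : {set 'rV[K]_s}) m :
  \sum_y ind F y * psi (- dotv m y) = #|K|%:R ^+ s * fourier psi (ind F) m.
Proof.
rewrite /fourier mulrA mulfV ?expf_neq0 ?qnz // mul1r; apply: eq_bigr => y _.
by rewrite mulrC dotvC.
Qed.

Lemma Aq_formula (K : finFieldType) s (psi : K -> algC) (E F : {set 'rV[K]_s}) :
  psi 0 = 1 -> (forall x y, psi (x + y) = psi x * psi y) -> (exists x, psi x != 1) ->
  (2 : K) != 0 -> forall t : K, t != 0 ->
  Aq psi E F t = #|K|%:R ^+ s * (\sum_(w : 'rV[K]_s) psi (- t * normsq w)) *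
     \sum_r psi (- (2 * 2 * - t)^-1 * r) * sigmaEF psi E F r.
Proof.
move=> p0 pD pn two t tnz.
set b := - t; set G := \sum_(w : 'rV[K]_s) psi (b * normsq w).
set u := - (2 * 2 * b)^-1.
have bnz : b != 0 by rewrite oppr_eq0.
have step : forall x y : 'rV[K]_s, ind E x * ind F y * psi (- (normsq (x - y) * t)) =
   \sum_m #|K|%:R ^- s * G * psi (u * normsq m) *
       ((ind E x * psi (dotv m x)) * (ind F y * psi (- dotv m y))).
  move=> x y.
  have -> : - (normsq (x - y) * t) = b * normsq (x - y) by rewrite /b mulNr mulrC.
  rewrite (inversion p0 pD pn (fun z => psi (b * normsq z)) (x - y)) /=.
  rewrite mulrA mulr_sumr; apply: eq_bigr => m _.
  rewrite (ghat p0 pD bnz two) -/G dotvBr pD; ring.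
rewrite /Aq; clearbody G.
under eq_bigr => x _ do under eq_bigr => y _ do rewrite step.
transitivity (\sum_m #|K|%:R ^- s * G * psi (u * normsq m) *
   ((\sum_x ind E x * psi (dotv m x)) * (\sum_y ind F y * psi (- dotv m y)))).
  under eq_bigr => x _ do rewrite exchange_big /=.
  rewrite exchange_big /=. apply: eq_bigr => m _ /=.
  symmetry; rewrite mulr_suml mulr_sumr; apply: eq_bigr => x _; rewrite !mulr_sumr; apply: eq_bigr => y _; by [].

under eq_bigr => m _ do rewrite (hatE_conj E p0 pD) hatF.
rewrite (partition_big (fun m => normsq m) xpredT) //= [RHS]mulr_sumr.
apply: eq_bigr => r _; rewrite /sigmaEF mulr_sumr [RHS]mulr_sumr.
apply: eq_bigr => m /eqP <-.
rewrite -/u; field; by rewrite expf_neq0 // qnz.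
Qed.

Lemma sum_ind (K : finFieldType) s (E : {set 'rV[K]_s}) :
  \sum_x ind E x = #|E|%:R.
Proof.
rewrite -sum1_card natr_sum [RHS]big_mkcond /=; apply: eq_bigr => x _.
by rewrite /ind; case: (x \in E).
Qed.

Lemma nu_formula (K : finFieldType) s (psi : K -> algC) (E F : {set 'rV[K]_s}) :
  psi 0 = 1 -> (forall x y, psi (x + y) = psi x * psi y) -> (exists x, psi x != 1) ->
  forall j, ((nu E F j)%:R : algC) = #|K|%:R^-1 * \sum_t psi (j * t) * Aq psi E F t.
Proof.
move=> p0 pD pn j.
have card : ((nu E F j)%:R : algC) =
   \sum_x \sum_y ind E x * ind F y * ((normsq (x - y) == j)%:R).
  rewrite /nu -sum1_card natr_sum big_mkcond pair_big /=; apply: eq_bigr => [[x y]] _.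
  rewrite inE /ind /=; case: (x \in E); case: (y \in F); case: (_ == j) => /=;
  by rewrite ?mul0r ?mul1r ?mulr0 ?mulr1.
have hind : forall x y : 'rV[K]_s, ((normsq (x - y) == j)%:R : algC) =
    #|K|%:R^-1 * \sum_t psi (j * t) * psi (- (normsq (x - y) * t)).
  move=> x y; have := orthK p0 pD pn (j - normsq (x - y)).
  rewrite subr_eq0 [j == _]eq_sym => e.
  have -> : \sum_t psi (j * t) * psi (- (normsq (x - y) * t)) =
     \sum_t psi ((j - normsq (x - y)) * t).
    by apply: eq_bigr => t _; rewrite mulrBl -mulNr pD mulNr.
  rewrite e; case: (_ == _) => /=; last by rewrite mulr0.
  by rewrite mulVf // qnz.
rewrite card.
transitivity (\sum_x \sum_y \sum_t #|K|%:R^-1 * psi (j * t) *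
     (ind E x * ind F y * psi (- (normsq (x - y) * t)))).
  apply: eq_bigr => x _; apply: eq_bigr => y _; rewrite hind mulr_sumr mulr_sumr.
  by apply: eq_bigr => t _; ring.
under eq_bigr => x _ do rewrite exchange_big /=.
rewrite exchange_big /= [RHS]mulr_sumr; apply: eq_bigr => t _.
rewrite mulrA /Aq mulr_sumr; apply: eq_bigr => x _; by rewrite mulr_sumr.
Qed.

Lemma Aq0 (K : finFieldType) s (psi : K -> algC) (E F : {set 'rV[K]_s}) :
  psi 0 = 1 -> Aq psi E F 0 = #|E|%:R * #|F|%:R.
Proof.
move=> p0; rewrite /Aq -!sum_ind mulr_suml; apply: eq_bigr => x _.
rewrite mulr_sumr; apply: eq_bigr => y _; by rewrite mulr0 oppr0 p0 mulr1.
Qed.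

Lemma two_nz (K : finFieldType) : odd #|K| -> (2 : K) != 0.
Proof.
move=> oK; apply/negP => /eqP h.
have pc : 2 \in [pchar K] by rewrite inE /= h eqxx.
have := card_pprimeChar pc.
rewrite -[#|pPrimeCharType pc|]/#|K| => e.
move: oK; rewrite e oddX orbC /=.
case: (logn 2 #|K|) e => // e _.
have : (1 < #|K|)%N.
  rewrite (cardD1 (0 : K)) (cardD1 (1 : K)) !inE oner_eq0 //.
by rewrite e.
Qed.

Lemma phiK (K : finFieldType) : (2 : K) != 0 -> forall t : K,
  (2 * 2 * (2 * 2 * t)^-1)^-1 = t.
Proof.
move=> two t; have [->|tnz] := eqVneq t 0; first by rewrite !(mulr0, invr0).
field; rewrite tnz oner_eq0 andbT /=.
have -> : (4 : K) = 2 * 2 by rewrite -natrM.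
by rewrite mulf_neq0.
Qed.

Lemma key_bound (K : finFieldType) s (psi : K -> algC) (E F : {set 'rV[K]_s}) :
  psi 0 = 1 -> (forall x y, psi (x + y) = psi x * psi y) -> (exists x, psi x != 1) ->
  (2 : K) != 0 ->
  \sum_(j : K) ((nu E F j)%:R : algC) ^+ 2 <=
  (#|E|%:R) ^+ 2 * (#|F|%:R) ^+ 2 / #|K|%:R +
  (#|K|%:R) ^+ (3 * s) * \sum_r `|sigmaEF psi E F r| ^+ 2.
Proof.
move=> p0 pD pn two.
set q : algC := #|K|%:R.
have qn0 : q != 0 by exact: qnz.
have q0 : 0 <= q by rewrite ler0n.
set B := fun u : K => \sum_r psi (u * r) * sigmaEF psi E F r.
pose phi := fun t : K => (2 * 2 * t)^-1.
have phiI : injective phi by apply: (can_inj (g := phi)) => t; apply: phiK.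
have e1 : forall j, ((nu E F j)%:R : algC) ^+ 2 =
    q^-1 ^+ 2 * `|\sum_t psi (j * t) * Aq psi E F t| ^+ 2.
  move=> j; have h : ((nu E F j)%:R : algC) = `|(nu E F j)%:R| by rewrite normr_nat.
  by rewrite {1}h (nu_formula E F p0 pD pn) normrM exprMn normfV normr_nat.
rewrite (eq_bigr _ (fun j _ => e1 j)) -mulr_sumr (parsevalK p0 pD pn).
rewrite (bigD1 0) //= Aq0 //.
have e2 : forall t, t != 0 -> `|Aq psi E F t| ^+ 2 = q ^+ (3 * s) * `|B (phi t)| ^+ 2.
  move=> t tnz; rewrite (Aq_formula E F p0 pD pn two tnz) !normrM !exprMn.
  have hG : `|\sum_(w : 'rV[K]_s) psi (- t * normsq w)| ^+ 2 = q ^+ s.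
    by rewrite normCK; apply: gauss2; rewrite ?oppr_eq0.
  rewrite hG.
  have -> : - (2 * 2 * - t)^-1 = phi t by rewrite /phi mulrN invrN opprK.
  rewrite normrX normr_nat -exprM -!exprD /B; congr (_ * _); congr (_ ^+ _).
  by rewrite -mulnSr mulnC.
rewrite (eq_bigr _ e2) -mulr_sumr.
have e3 : \sum_(t | t != 0) `|B (phi t)| ^+ 2 <= q * \sum_r `|sigmaEF psi E F r| ^+ 2.
  rewrite -(parsevalK p0 pD pn) -/B.
  have -> : \sum_j `|B j| ^+ 2 = \sum_t `|B (phi t)| ^+ 2.
    by rewrite (reindex_inj phiI).
  by rewrite [X in _ <= X](bigD1 0) //= lerDr exprn_ge0.
rewrite -/q normrM !normr_nat.
have qpos : 0 < q by rewrite lt_def qn0.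
set S := \sum_(i | i != 0) _.
set T := \sum_r _.
have -> : q^-1 ^+ 2 * (q * ((#|E|%:R * #|F|%:R) ^+ 2 + q ^+ (3 * s) * S)) =
   #|E|%:R ^+ 2 * #|F|%:R ^+ 2 / q + q ^+ (3 * s) * (q^-1 * S).
  by field.
apply: lerD => //; apply: ler_wpM2l; first by rewrite exprn_ge0.
by rewrite -(ler_pM2l qpos) mulrA mulfV // mul1r.
Qed.

Theorem lemma7 (K : finFieldType) (s : nat) (psi : K -> algC)
  (E F : {set 'rV[K]_s}) :
  odd #|K| -> (1 <= s)%N -> nontriv_add_char psi ->
  let q : algC := #|K|%:R in
  let nE : algC := #|E|%:R in
  let nF : algC := #|F|%:R in
  let LHS := \sum_(j : K) ((nu E F j)%:R : algC) ^+ 2 in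
  let mid := nE ^+ 2 * nF ^+ 2 / q + q ^+ (s - 1) * nE * nF
             + q ^+ (3 * s) * `|sigmaEF psi E F 0| ^+ 2
             + q ^+ (3 * s) * \sum_(r : K | r != 0) sigma psi E r * sigma psi F r in
  let rhs := nE ^+ 2 * nF ^+ 2 / q
             + q ^+ (3 * s) * \sum_(r : K) sigma psi E r * sigma psi F r
             + q ^+ (s - 1) * nE * nF in
  LHS <= mid /\ mid <= rhs.
Proof.
move=> oK s1 [p0 pD pn] q nE nF LHS mid rhs.
have two := two_nz oK.
have KB := key_bound E F p0 pD pn two.
have cs : forall r, `|sigmaEF psi E F r| ^+ 2 <= sigma psi E r * sigma psi F r.
  by move=> r; exact: CS.
have c0 : 0 <= q ^+ (3 * s) by rewrite exprn_ge0 // ler0n.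
have b0 : 0 <= q ^+ (s - 1) * nE * nF by rewrite !mulr_ge0 ?exprn_ge0 ?ler0n.
split.
  apply: le_trans KB _; rewrite (bigD1 0) //= mulrDr /mid -!addrA.
  apply: lerD => //; apply: ler_wpDl => //; apply: lerD => //.
  by apply: ler_wpM2l => //; apply: ler_sum => r _; exact: cs.
rewrite -subr_ge0.
have -> : rhs - mid = q ^+ (3 * s) *
    (sigma psi E 0 * sigma psi F 0 - `|sigmaEF psi E F 0| ^+ 2).
  by rewrite /rhs /mid (bigD1 0) //=; ring.
by rewrite mulr_ge0 // subr_ge0.
Qed.
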